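(* Let $N=3$, $p>5$, $\lambda>0$ and $b>0$. If the problem \[ u''+\frac{2}{r}u'+\lambda u+u^p=0,\ r\in(0,b),\qquad u'(0)=u(b)=0, \] has a positive solution, then \[ \frac{1}{\sqrt{\lambda}}\left(\frac{2\sqrt{2(p-5)}}{p+3}+\arccos\left(-\sqrt{\frac{p-5}{p+3}}\right)\right)<b<\frac{\pi}{\sqrt{\lambda}}, \] equivalently \[ \frac{1}{\pi^2}\left(\frac{2\sqrt{2(p-5)}}{p+3}+\arccos\left(-\sqrt{\frac{p-5}{p+3}}\right)\right)^2\lambda_1(B(b))<\lambda<\lambda_1(B(b)), \] where $\lambda_1(B(b))=\pi^2/b^2$.
   Context: $\lambda_1(B(b))$ is the first Dirichlet eigenvalue of $-\Delta$ on the ball of radius $b$ in $\mathbb{R}^3$. A positive solution is one positive on $[0,b)$. *)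

(* Defs.v *)
From Stdlib Require Import Reals.
From Coquelicot Require Import Coquelicot.
Open Scope R_scope.

(* Classical positive solution of
     u'' + (2/r) u' + lambda u + u^p = 0 on (0,b),  u'(0) = 0,  u(b) = 0,
   positive on [0,b).  u is a function R -> R of which only the values on
   [0,b] matter; u1, u2 are its first and second derivatives on (0,b).
   u'(0)=0 is the one-sided (right) derivative at 0; u is continuous at b
   from the left with u(b)=0.  u^p (p real) is Rpower, legitimate as u>0. *)
Definition positive_radial_solution (p lambda b : R) (u : R -> R) : Prop :=
  exists u1 u2 : R -> R,
    (forall r, 0 < r < b -> is_derive u r (u1 r)) /\
    (forall r, 0 < r < b -> is_derive u1 r (u2 r)) /\
    (forall r, 0 < r < b ->
        u2 r + (2 / r) * u1 r + lambda * u r + Rpower (u r) p = 0) /\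
    filterlim (fun h => (u h - u 0) / h) (at_right 0) (locally 0) /\
    u b = 0 /\
    filterlim u (at_left b) (locally 0) /\
    (forall r, 0 <= r < b -> 0 < u r).

Definition lambda1_ball3 (b : R) : R := PI ^ 2 / b ^ 2.

Definition lower_const (p : R) : R :=
  2 * sqrt (2 * (p - 5)) / (p + 3) + acos (- sqrt ((p - 5) / (p + 3))).

(* Main.v *)
Require Import Defs.
From Stdlib Require Import Reals Lra.
From Coquelicot Require Import Coquelicot.
Open Scope R_scope.

Lemma mvt_ex (G G' : R -> R) a c : a < c ->
  (forall x, a <= x <= c -> is_derive G x (G' x)) ->
  exists d, a <= d <= c /\ G c - G a = G' d * (c - a).
Proof.
  intros Hac HD.
  destruct (MVT_gen G a c G') as [d [Hd E]].
  - intros x Hx. apply HD. rewrite Rmin_left in Hx by lra. rewrite Rmax_right in Hx by lra. lra.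
  - intros x Hx. rewrite Rmin_left in Hx by lra. rewrite Rmax_right in Hx by lra.
    apply continuity_pt_filterlim. apply (@ex_derive_continuous R_AbsRing R_NormedModule).
    exists (G' x). apply HD. lra.
  - rewrite Rmin_left in Hd by lra. rewrite Rmax_right in Hd by lra. exists d. split; [lra|exact E].
Qed.

Lemma mvt_le (G G' : R -> R) a c : a <= c ->
  (forall x, a <= x <= c -> is_derive G x (G' x)) ->
  (forall x, a <= x <= c -> G' x <= 0) -> G c <= G a.
Proof.
  intros Hac HD HN. destruct (Req_dec a c) as [->|Hne]; [lra|].
  destruct (mvt_ex G G' a c) as [d [Hd E]]; [lra|exact HD|].
  specialize (HN d Hd). nra.
Qed.

Lemma mvt_lt (G G' : R -> R) a c : a < c ->
  (forall x, a <= x <= c -> is_derive G x (G' x)) ->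
  (forall x, a <= x <= c -> G' x < 0) -> G c < G a.
Proof.
  intros Hac HD HN.
  destruct (mvt_ex G G' a c) as [d [Hd E]]; [lra|exact HD|].
  specialize (HN d Hd). nra.
Qed.

Lemma mvt_abs (G G' : R -> R) a c M : a <= c ->
  (forall x, a <= x <= c -> is_derive G x (G' x)) ->
  (forall x, a <= x <= c -> Rabs (G' x) <= M) -> Rabs (G c - G a) <= M * (c - a).
Proof.
  intros Hac HD HN. destruct (Req_dec a c) as [->|Hne].
  - replace (G c - G c) with 0 by ring. rewrite Rabs_R0. lra.
  - destruct (mvt_ex G G' a c) as [d [Hd E]]; [lra|exact HD|].
    rewrite E, Rabs_mult, (Rabs_right (c - a)) by lra.
    apply Rmult_le_compat_r; [lra|]. apply HN; lra.
Qed.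

Lemma sin_lip a c : Rabs (sin c - sin a) <= Rabs (c - a).
Proof.
  destruct (Rle_dec a c).
  - rewrite (Rabs_right (c - a)) by lra. replace (c - a) with (1 * (c - a)) by ring.
    apply (mvt_abs sin cos); [lra| |].
    + intros x _. apply is_derive_sin.
    + intros x _. pose proof (COS_bound x). apply Rabs_le; lra.
  - rewrite Rabs_minus_sym, (Rabs_minus_sym c a).
    rewrite (Rabs_right (a - c)) by lra. replace (a - c) with (1 * (a - c)) by ring.
    apply (mvt_abs sin cos); [lra| |].
    + intros x _. apply is_derive_sin.
    + intros x _. pose proof (COS_bound x). apply Rabs_le; lra.
Qed.

Lemma zcos z : 0 <= z <= PI/2 -> z * cos z <= sin z.
Proof.
  intros Hz.
  assert (H := mvt_le (fun z => z * cos z - sin z) (fun z => - (z * sin z)) 0 z).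
  simpl in H. rewrite Rmult_0_l, sin_0 in H.
  assert (z * cos z - sin z <= 0 - 0); [|lra].
  apply H; [lra| |].
  - intros x _. auto_derive; auto. ring.
  - intros x Hx. assert (0 <= sin x) by (apply sin_ge_0; pose proof PI_RGT_0; lra). nra.
Qed.

Lemma sin_le_id t : 0 <= t -> sin t <= t.
Proof. intros H. destruct (Req_dec t 0) as [->|]. rewrite sin_0; lra. left; apply sin_lt_x; lra. Qed.

Lemma Qineq al y : 0 <= al <= PI/2 -> 0 <= y <= PI/2 ->
  0 <= (y - al) * sin y + sin al * sin (al - y).
Proof.
  intros Ha Hy. pose proof PI_RGT_0.
  assert (0 <= sin al) by (apply sin_ge_0; lra).
  assert (0 <= cos al) by (apply cos_ge_0; lra).
  assert (0 <= sin y) by (apply sin_ge_0; lra).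
  destruct (Rle_dec al y).
  - set (t := y - al). replace (al - y) with (- t) by (unfold t; ring). rewrite sin_neg.
    assert (sin t <= t) by (apply sin_le_id; unfold t; lra).
    assert (0 <= sin t) by (apply sin_ge_0; unfold t; lra).
    assert (sin al <= sin y) by (apply sin_incr_1; lra).
    nra.
  - set (z := al - y). replace y with (al - z) by (unfold z; ring).
    assert (z * cos z <= sin z) by (apply zcos; unfold z; lra).
    assert (0 <= sin z) by (apply sin_ge_0; unfold z; lra).
    replace (al - (al - z)) with z by ring.
    rewrite sin_minus. assert (0 <= z) by (unfold z; lra).
    assert (0 <= sin al * (sin z - z * cos z)) by (apply Rmult_le_pos; lra).
    assert (0 <= z * cos al * sin z) by (apply Rmult_le_pos; [apply Rmult_le_pos|]; lra).
    nra.
Qed.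

Definition k2 p := (p - 5) / (p + 3).
Definition kk p := sqrt (k2 p).
Definition al p := asin (kk p).
Definition sst p := al p + kk p * sqrt (1 - k2 p).

Lemma k2_bounds p : 5 < p -> 0 < k2 p < 1.
Proof. intros. unfold k2. split. apply Rdiv_lt_0_compat; lra.
  apply (Rmult_lt_reg_r (p+3)); [lra|]. unfold Rdiv. rewrite Rmult_assoc, Rinv_l by lra. lra. Qed.

Lemma kk_bounds p : 5 < p -> 0 < kk p < 1.
Proof. intros H. apply k2_bounds in H. unfold kk. split. apply sqrt_lt_R0; lra.
  rewrite <- sqrt_1. apply sqrt_lt_1; lra. Qed.

Lemma al_facts p : 5 < p -> 0 <= al p <= PI/2 /\ sin (al p) = kk p /\ cos (al p) = sqrt (1 - k2 p)
  /\ kk p * kk p = k2 p.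
Proof.
  intros H. pose proof (kk_bounds p H). pose proof (k2_bounds p H). unfold al.
  assert (Hk: kk p * kk p = k2 p) by (unfold kk; apply sqrt_sqrt; lra).
  split; [|split; [|split]].
  - pose proof (asin_bound (kk p)). split; [|lra]. rewrite <- asin_0. 
    destruct (Rle_dec (asin 0) (asin (kk p))); [auto|].
    exfalso. assert (Hlt: asin (kk p) < asin 0) by lra.
    apply sin_increasing_1 in Hlt; try (pose proof (asin_bound 0); lra).
    rewrite !sin_asin in Hlt; lra.
  - apply sin_asin; lra.
  - rewrite cos_asin by lra. unfold Rsqr. rewrite Hk. reflexivity.
  - exact Hk.
Qed.

Lemma sst_bounds p : 5 < p -> 0 <= sst p <= PI/2.
Proof.
  intros H. destruct (al_facts p H) as [Ha [Hs [Hc Hk]]]. pose proof (kk_bounds p H).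
  unfold sst. rewrite <- Hc. pose proof PI_RGT_0.
  assert (0 <= cos (al p)) by (apply cos_ge_0; lra).
  split; [nra|].
  assert (Hq: sin (PI/2 - al p) <= PI/2 - al p) by (apply sin_le_id; lra).
  rewrite sin_shift in Hq. nra.
Qed.

Lemma lower_const_eq p : 5 < p ->
  2 * sqrt (2 * (p - 5)) / (p + 3) + acos (- sqrt ((p - 5) / (p + 3))) = PI/2 + sst p.
Proof.
  intros H. pose proof (kk_bounds p H). pose proof (k2_bounds p H).
  fold (k2 p). fold (kk p). rewrite acos_opp, acos_asin by lra. fold (al p).
  unfold sst. 
  assert (kk p * sqrt (1 - k2 p) = 2 * sqrt (2 * (p - 5)) / (p + 3)); [|lra].
  unfold kk. rewrite <- sqrt_mult_alt by lra.
  apply sqrt_lem_1.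
  - nra.
  - apply Rmult_le_pos; [|left; apply Rinv_0_lt_compat; lra]. pose proof (sqrt_pos (2*(p-5))). lra.
  - unfold k2. assert (Hsq: sqrt (2 * (p - 5)) * sqrt (2 * (p - 5)) = 2 * (p-5)) by (apply sqrt_sqrt; lra).
    unfold Rdiv. 
    replace (2 * sqrt (2 * (p - 5)) * / (p + 3) * (2 * sqrt (2 * (p - 5)) * / (p + 3)))
      with (4 * (sqrt (2 * (p - 5)) * sqrt (2 * (p - 5))) * / (p+3) * / (p+3)) by ring.
    rewrite Hsq. field. lra.
Qed.

Definition hh p s x := (1 + k2 p) * (sin x + sin s) - (x + s) * cos x.
Definition hd p s x := k2 p * cos x + (x + s) * sin x.

Lemma hd_nonneg p s x : 5 < p -> 0 <= s <= sst p -> -s <= x <= 0 -> 0 <= hd p s x.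
Proof.
  intros Hp Hs Hx. destruct (al_facts p Hp) as [Ha [Hsn [Hc Hk]]]. pose proof (sst_bounds p Hp).
  set (y := - x). replace x with (- y) by (unfold y; ring).
  unfold hd. rewrite cos_neg, sin_neg.
  pose proof (Qineq (al p) y Ha ltac:(unfold y; lra)) as Q.
  rewrite sin_minus, Hsn, Hc in Q.
  assert (0 <= sin y) by (apply sin_ge_0; unfold y; pose proof PI_RGT_0; lra).
  unfold sst in *. rewrite <- Hk. nra.
Qed.

Lemma is_derive_hh p s x : is_derive (hh p s) x (hd p s x).
Proof. unfold hh, hd. auto_derive; auto. ring. Qed.

Lemma hh_nonneg p s x : 5 < p -> 0 <= s <= sst p -> -s <= x <= 0 -> 0 <= hh p s x.
Proof.
  intros Hp Hs Hx.
  assert (H := mvt_le (fun x => - hh p s x) (fun x => - hd p s x) (-s) x).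
  simpl in H. assert (hh p s (-s) = 0) by (unfold hh; rewrite sin_neg; ring).
  assert (- hh p s x <= - hh p s (-s)); [|lra].
  apply H; [lra| |].
  - intros t _. apply (is_derive_opp (hh p s)). apply is_derive_hh.
  - intros t Ht. pose proof (hd_nonneg p s t Hp Hs ltac:(lra)). lra.
Qed.

Lemma hh_pos p s x : 5 < p -> 0 <= s <= sst p -> 0 < x < PI + s -> 0 < hh p s x.
Proof.
  intros Hp Hs Hx. pose proof PI_RGT_0. pose proof (sst_bounds p Hp). pose proof (k2_bounds p Hp).
  destruct (Rle_dec x (PI/2)).
  - assert (Hz0 := hh_nonneg p s 0 Hp Hs ltac:(lra)).
    assert (- hh p s x < - hh p s 0); [|lra].
    apply (mvt_lt (fun x => - hh p s x) (fun x => - hd p s x) 0 x); [lra| |].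
    + intros t _. apply (is_derive_opp (hh p s)). apply is_derive_hh.
    + intros t Ht. unfold hd.
      assert (0 <= sin t) by (apply sin_ge_0; lra).
      destruct (Req_dec t (PI/2)) as [->|Hne].
      * rewrite sin_PI2, cos_PI2. lra.
      * assert (0 < cos t) by (apply cos_gt_0; lra).
        assert (0 < k2 p * cos t) by (apply Rmult_lt_0_compat; lra).
        assert (0 <= (t + s) * sin t) by (apply Rmult_le_pos; lra). lra.
  - unfold hh.
    assert (cos x <= 0) by (apply cos_le_0; lra).
    assert (sin (-s) < sin (PI - x)) by (apply sin_increasing_1; lra).
    rewrite sin_neg, sin_PI_x in H3. nra.
Qed.

Lemma psi_nonneg s x : 0 <= s <= PI/2 -> -s <= x <= PI + s -> 0 <= sin x + sin s.
Proof.
  intros Hs Hx. pose proof PI_RGT_0.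
  destruct (Rle_dec x (PI/2)).
  - assert (sin (-s) <= sin x) by (apply sin_incr_1; lra). rewrite sin_neg in H0. lra.
  - assert (sin (-s) <= sin (PI - x)) by (apply sin_incr_1; lra).
    rewrite sin_neg, sin_PI_x in H0. lra.
Qed.

Definition Sol (p lambda b : R) (u u1 u2 : R -> R) : Prop :=
    (forall r, 0 < r < b -> is_derive u r (u1 r)) /\
    (forall r, 0 < r < b -> is_derive u1 r (u2 r)) /\
    (forall r, 0 < r < b ->
        u2 r + (2 / r) * u1 r + lambda * u r + Rpower (u r) p = 0) /\
    filterlim (fun h => (u h - u 0) / h) (at_right 0) (locally 0) /\
    u b = 0 /\
    filterlim u (at_left b) (locally 0) /\
    (forall r, 0 <= r < b -> 0 < u r).

Lemma lim_left (f : R -> R) b l : filterlim f (at_left b) (locally l) ->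
  forall eps, 0 < eps -> exists d, 0 < d /\ forall r, b - d < r < b -> Rabs (f r - l) < eps.
Proof.
  intros H eps He. apply filterlim_locally with (eps := mkposreal eps He) in H.
  destruct H as [d Hd]. exists d. split; [apply cond_pos|].
  intros r Hr. apply (Hd r).
  - unfold ball; simpl. unfold AbsRing_ball, abs, minus, plus, opp; simpl. apply Rabs_lt_between. lra.
  - lra.
Qed.

Lemma lim_right (f : R -> R) b l : filterlim f (at_right b) (locally l) ->
  forall eps, 0 < eps -> exists d, 0 < d /\ forall r, b < r < b + d -> Rabs (f r - l) < eps.
Proof.
  intros H eps He. apply filterlim_locally with (eps := mkposreal eps He) in H.
  destruct H as [d Hd]. exists d. split; [apply cond_pos|].
  intros r Hr. apply (Hd r).
  - unfold ball; simpl. unfold AbsRing_ball, abs, minus, plus, opp; simpl. apply Rabs_lt_between. lra.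
  - lra.
Qed.

Lemma Rpower_pos x y : 0 < Rpower x y.
Proof. unfold Rpower. apply exp_pos. Qed.

Lemma Rpower_1_l y : Rpower 1 y = 1.
Proof. unfold Rpower. rewrite ln_1, Rmult_0_r. apply exp_0. Qed.

Lemma A_deriv p lam b u u1 u2 t : Sol p lam b u u1 u2 -> 0 < t < b ->
  is_derive (fun t => t^2 * u1 t) t (- t^2 * (lam * u t + Rpower (u t) p)).
Proof.
  intros [Hu [Hu1 [Hode _]]] Ht.
  specialize (Hode t Ht).
  auto_derive.
  - exists (u2 t). apply Hu1; auto.
  - replace (Derive (fun x => u1 x) t) with (u2 t) by (symmetry; apply is_derive_unique; apply Hu1; auto).
    replace (u2 t) with (- (2 / t) * u1 t - lam * u t - Rpower (u t) p) by lra.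
    field. lra.
Qed.

Lemma bound0 p lam b u u1 u2 : 0 <= p -> 0 < lam -> 0 < b -> Sol p lam b u u1 u2 ->
  exists d U0 V1, 0 < d /\ 2 * d <= b /\ d <= 1 /\
    forall r, 0 < r < d -> 0 < u r <= U0 /\ Rabs (u1 r) <= V1.
Proof.
  intros Hp Hl Hb HS. pose proof HS as [Hu [Hu1 [Hode [Hd0 [Hub [Hlb Hpos]]]]]].
  destruct (lim_right _ _ _ Hd0 1 Rlt_0_1) as [d0 [Hd0p Hd0b]].
  set (d := Rmin (Rmin (d0/2) (b/2)) 1).
  assert (Hd1 : d <= d0/2) by (unfold d; pose proof (Rmin_l (Rmin (d0/2) (b/2)) 1); pose proof (Rmin_l (d0/2) (b/2)); lra).
  assert (Hd2 : d <= b/2) by (unfold d; pose proof (Rmin_l (Rmin (d0/2) (b/2)) 1); pose proof (Rmin_r (d0/2) (b/2)); lra).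
  assert (Hd3 : d <= 1) by (unfold d; apply Rmin_r).
  assert (Hdp : 0 < d) by (unfold d; repeat apply Rmin_glb_lt; lra).
  assert (Hu0 : 0 < u 0) by (apply Hpos; lra).
  assert (Hclose : forall t, 0 < t < 2 * d -> Rabs (u t - u 0) < t).
  { intros t Ht. specialize (Hd0b t ltac:(lra)). rewrite Rminus_0_r in Hd0b.
    unfold Rdiv in Hd0b. rewrite Rabs_mult, Rabs_inv, (Rabs_right t) in Hd0b by lra.
    apply (Rmult_lt_compat_r t) in Hd0b; [|lra]. rewrite Rmult_assoc, Rinv_l, Rmult_1_r in Hd0b by lra. lra. }
  set (U0 := u 0 + 2).
  assert (HU : forall t, 0 < t < 2 * d -> 0 < u t <= U0).
  { intros t Ht. split. apply Hpos; lra. specialize (Hclose t Ht). apply Rabs_lt_between in Hclose. unfold U0; lra. }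
  set (C0 := lam * U0 + Rpower U0 p).
  assert (HC : forall t, 0 < t < 2 * d -> 0 <= lam * u t + Rpower (u t) p <= C0).
  { intros t Ht. destruct (HU t Ht). pose proof (Rpower_pos (u t) p).
    pose proof (Rle_Rpower_l (u t) U0 p Hp ltac:(lra)). unfold C0. split; nra. }
  exists d, U0, (12 + 4 * C0). split; [lra|split;[lra|split;[lra|]]].
  intros r Hr. split; [apply HU; lra|].
  destruct (mvt_ex u u1 r (2*r)) as [xi [Hxi Exi]]; [lra| intros x Hx; apply Hu; lra |].
  assert (Hxi3 : Rabs (u1 xi) <= 3).
  { pose proof (Hclose (2*r) ltac:(lra)) as Ha1. pose proof (Hclose r ltac:(lra)) as Ha2.
    apply Rabs_lt_between in Ha1. apply Rabs_lt_between in Ha2.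
    replace (2 * r - r) with r in Exi by ring.
    apply Rabs_le. split; apply (Rmult_le_reg_r r); lra. }
  assert (HA := mvt_abs (fun t => t^2 * u1 t) (fun t => - t^2 * (lam * u t + Rpower (u t) p)) r xi (4 * r^2 * C0)
     ltac:(lra)).
  simpl in HA.
  assert (HA' : Rabs (xi ^ 2 * u1 xi - r ^ 2 * u1 r) <= 4 * r ^ 2 * C0 * (xi - r)).
  { apply HA.
    - intros x Hx. apply (A_deriv p lam b u u1 u2 x HS). lra.
    - intros x Hx. destruct (HC x ltac:(lra)). rewrite Rabs_mult, Rabs_Ropp. rewrite !Rabs_right by nra. assert (x*x <= 4*(r*r)) by nra. assert (0 <= x * x) by nra. nra. }
  clear HA.
  apply Rabs_le_between in HA'. apply Rabs_le_between in Hxi3.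
  assert (HCp : 0 <= C0) by (destruct (HC r ltac:(lra)); lra).
  assert (xi^2 <= 4 * r^2) by nra.
  assert (HK : 0 <= 4 * r ^ 2 * C0) by (apply Rmult_le_pos; [nra|lra]).
  assert (0 <= 4 * r ^ 2 * C0 * (xi - r) <= 4 * r^3 * C0) by (split; [apply Rmult_le_pos; lra| replace (4 * r^3 * C0) with (4 * r ^ 2 * C0 * r) by ring; apply Rmult_le_compat_l; lra]).
  assert (Hr2 : 0 < r^2) by nra.
  apply Rabs_le. split.
  - apply (Rmult_le_reg_l (r^2)); [lra|]. nra.
  - apply (Rmult_le_reg_l (r^2)); [lra|]. nra.
Qed.

Lemma boundb p lam b u u1 u2 : 0 <= p -> 0 < lam -> 0 < b -> Sol p lam b u u1 u2 ->
  exists d V, 0 < d /\ d <= b/2 /\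
    forall r, b - d < r < b -> Rabs (u1 r) <= V.
Proof.
  intros Hp Hl Hb HS. pose proof HS as [Hu [Hu1 [Hode [Hd0 [Hub [Hlb Hpos]]]]]].
  destruct (lim_left _ _ _ Hlb 1 Rlt_0_1) as [d0 [Hd0p Hd0b]].
  set (d := Rmin (d0/2) (b/2)).
  assert (Hd1 : d <= d0/2) by apply Rmin_l.
  assert (Hd2 : d <= b/2) by apply Rmin_r.
  assert (Hdp : 0 < d) by (unfold d; apply Rmin_glb_lt; lra).
  set (r0 := b - d).
  set (C := b^2 * (lam + 1) * b).
  exists d, (4 * (Rabs (r0^2 * u1 r0) + C) / b^2).
  split; [lra|split;[lra|]].
  intros r Hr.
  assert (HA := mvt_abs (fun t => t^2 * u1 t) (fun t => - t^2 * (lam * u t + Rpower (u t) p)) r0 r (b^2 * (lam + 1))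
     ltac:(unfold r0; lra)).
  assert (HA' : Rabs (r ^ 2 * u1 r - r0 ^ 2 * u1 r0) <= b^2 * (lam + 1) * (r - r0)).
  { apply HA.
    - intros x Hx. apply (A_deriv p lam b u u1 u2 x HS). unfold r0 in *; lra.
    - intros x Hx. assert (Hux : 0 < u x < 1).
      { split. apply Hpos; unfold r0 in *; lra. specialize (Hd0b x ltac:(unfold r0 in *; lra)).
        rewrite Rminus_0_r in Hd0b. apply Rabs_lt_between in Hd0b. lra. }
      pose proof (Rpower_pos (u x) p).
      pose proof (Rle_Rpower_l (u x) 1 p Hp ltac:(lra)). rewrite Rpower_1_l in H0.
      rewrite Rabs_mult, Rabs_Ropp. rewrite !Rabs_right by nra.
      assert (x*x <= b*b) by (unfold r0 in *; nra). assert (0 <= x * x) by nra.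
      simpl. assert (0 <= lam * u x + Rpower (u x) p <= lam + 1) by nra. rewrite !Rmult_1_r. apply Rmult_le_compat; lra. }
  clear HA.
  assert (Hrr : r - r0 <= b) by (unfold r0 in *; lra).
  assert (HB : Rabs (r^2 * u1 r) <= Rabs (r0^2 * u1 r0) + C).
  { unfold C. pose proof (Rabs_triang_inv (r ^ 2 * u1 r) (r0 ^ 2 * u1 r0)).
    assert (b ^ 2 * (lam + 1) * (r - r0) <= b ^ 2 * (lam + 1) * b) by (apply Rmult_le_compat_l; [nra|lra]).
    lra. }
  rewrite Rabs_mult, (Rabs_right (r^2)) in HB by (apply Rle_ge, pow2_ge_0).
  assert (Hr2 : b^2 / 4 <= r^2) by (unfold r0 in *; nra).
  assert (Hb2 : 0 < b^2) by nra.
  apply (Rmult_le_reg_l (b^2/4)); [lra|].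
  unfold Rdiv. replace (b ^ 2 * / 4 * (4 * (Rabs (r0 ^ 2 * u1 r0) + C) * / b ^ 2)) with (Rabs (r0 ^ 2 * u1 r0) + C) by (field; lra).
  pose proof (Rabs_pos (u1 r)). nra.
Qed.

Definition Wf w (u u1 : R -> R) r := (u r + r * u1 r) * sin (w * r) - w * r * u r * cos (w * r).

Lemma W_deriv p lam b u u1 u2 r : 0 < lam -> Sol p lam b u u1 u2 -> 0 < r < b ->
  is_derive (Wf (sqrt lam) u u1) r (- r * Rpower (u r) p * sin (sqrt lam * r)).
Proof.
  intros Hl [Hu [Hu1 [Hode _]]] Hr. specialize (Hode r Hr).
  assert (Hw : sqrt lam * sqrt lam = lam) by (apply sqrt_sqrt; lra).
  unfold Wf. auto_derive.
  - repeat match goal with |- _ /\ _ => split | |- True => exact I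
      | |- ex_derive (fun x => u x) _ => exists (u1 r); apply Hu; auto
      | |- ex_derive (fun x => u1 x) _ => exists (u2 r); apply Hu1; auto
      | |- 0 < _ => auto end.
  - replace (Derive (fun x => u1 x) r) with (u2 r) by (symmetry; apply is_derive_unique; apply Hu1; auto).
    replace (Derive (fun x => u x) r) with (u1 r) by (symmetry; apply is_derive_unique; apply Hu; auto).
    replace (u2 r) with (- (2 / r) * u1 r - lam * u r - Rpower (u r) p) by lra.
    set (w := sqrt lam) in *. rewrite <- Hw. field. lra.
Qed.

Definition psi w s r := sin (2 * w * r - s) + sin s.
Definition psi1 w s r := 2 * w * cos (2 * w * r - s).
Definition psi2 w s r := - (4 * w * w) * sin (2 * w * r - s).

Definition Jf p lam s (u u1 : R -> R) r :=
  let w := sqrt lam in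
  psi w s r * ((u r + r * u1 r)^2 / 2 + lam * r^2 * (u r)^2 / 2 + r^2 * u r * Rpower (u r) p / (p + 1))
  - psi1 w s r * r * u r * (u r + r * u1 r) / 2 + psi2 w s r * r^2 * (u r)^2 / 4.

Lemma J_deriv p lam b s u u1 u2 r : 0 < lam -> 0 < p -> Sol p lam b u u1 u2 -> 0 < r < b ->
  is_derive (Jf p lam s u u1) r
   (r^2 * u r * Rpower (u r) p / (p + 1) *
     (psi1 (sqrt lam) s r * (p + 3) / 2 - (p - 1) * psi (sqrt lam) s r / r)).
Proof.
  intros Hl Hp HS Hr. pose proof HS as [Hu [Hu1 [Hode [_ [_ [_ Hpos]]]]]]. specialize (Hode r Hr).
  assert (Hur : 0 < u r) by (apply Hpos; lra).
  assert (Hw : sqrt lam * sqrt lam = lam) by (apply sqrt_sqrt; lra).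
  unfold Jf, psi, psi1, psi2, Rpower in *. auto_derive.
  - repeat match goal with |- _ /\ _ => split | |- True => exact I
      | |- ex_derive (fun x => u x) _ => exists (u1 r); apply Hu; auto
      | |- ex_derive (fun x => u1 x) _ => exists (u2 r); apply Hu1; auto
      | |- 0 < _ => auto end.
  - replace (Derive (fun x => u1 x) r) with (u2 r) by (symmetry; apply is_derive_unique; apply Hu1; auto).
    replace (Derive (fun x => u x) r) with (u1 r) by (symmetry; apply is_derive_unique; apply Hu; auto).
    replace (u2 r) with (- (2 / r) * u1 r - lam * u r - exp (p * ln (u r))) by lra.
    set (w := sqrt lam) in *. rewrite <- Hw. replace (2 * w * r + - s) with (2 * w * r - s) by ring. field. split; lra.
Qed.

Lemma G_nonpos (G G' : R -> R) c : 0 < c ->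
  (forall x, 0 < x < c -> is_derive G x (G' x)) ->
  (forall x, 0 < x < c -> G' x <= 0) ->
  (exists d C, 0 < d /\ forall t, 0 < t < d -> G t <= C * t) ->
  forall r, 0 < r < c -> G r <= 0.
Proof.
  intros Hc HD HN [d [C [Hd HB]]] r Hr.
  destruct (Rle_dec (G r) 0) as [|Hg]; [auto|exfalso].
  set (C' := Rabs C + 1).
  assert (HC' : 0 < C') by (unfold C'; pose proof (Rabs_pos C); lra).
  set (t := Rmin (Rmin (d/2) (r/2)) (G r / (2 * C'))).
  assert (Ht1 : t <= d/2) by (unfold t; pose proof (Rmin_l (Rmin (d/2) (r/2)) (G r / (2 * C'))); pose proof (Rmin_l (d/2) (r/2)); lra).
  assert (Ht2 : t <= r/2) by (unfold t; pose proof (Rmin_l (Rmin (d/2) (r/2)) (G r / (2 * C'))); pose proof (Rmin_r (d/2) (r/2)); lra).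
  assert (Ht3 : t <= G r / (2 * C')) by (unfold t; apply Rmin_r).
  assert (Htp : 0 < t) by (unfold t; repeat apply Rmin_glb_lt; try lra; apply Rdiv_lt_0_compat; lra).
  assert (H1 : G r <= G t).
  { apply (mvt_le G G' t r); [lra| |].
    - intros x Hx. apply HD. lra.
    - intros x Hx. apply HN. lra. }
  assert (H2 : G t <= C * t) by (apply HB; lra).
  assert (H3 : C * t <= C' * t) by (unfold C'; pose proof (Rle_abs C); nra).
  assert (H4 : C' * t <= G r / 2).
  { apply (Rmult_le_compat_l C') in Ht3; [|lra].
    replace (C' * (G r / (2 * C'))) with (G r / 2) in Ht3 by (field; lra). lra. }
  lra.
Qed.

Lemma final_contra (G G' : R -> R) c r1 : r1 < c ->
  (forall x, r1 <= x < c -> is_derive G x (G' x)) ->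
  (forall x, r1 <= x < c -> G' x <= 0) -> G r1 < 0 ->
  (forall eps, 0 < eps -> exists r, r1 < r < c /\ - eps < G r) -> False.
Proof.
  intros Hc HD HN Hg Hlim.
  destruct (Hlim (- G r1) ltac:(lra)) as [r [Hr Hgr]].
  assert (G r <= G r1); [|lra].
  apply (mvt_le G G' r1 r); [lra| |].
  - intros x Hx. apply HD. lra.
  - intros x Hx. apply HN. lra.
Qed.

Lemma sin_small t : 0 <= t -> Rabs (sin t) <= t.
Proof. intros H. pose proof (sin_lip 0 t) as H0. rewrite sin_0, !Rminus_0_r, (Rabs_right t) in H0 by lra. exact H0. Qed.

Lemma abs_prod_le a b A B : Rabs a <= A -> Rabs b <= B -> a * b <= A * B.
Proof.
  intros Ha Hb. pose proof (Rle_abs (a * b)). rewrite Rabs_mult in H.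
  pose proof (Rabs_pos a). pose proof (Rabs_pos b).
  assert (Rabs a * Rabs b <= A * B) by (apply Rmult_le_compat; lra). lra.
Qed.

Lemma upper p lam b u u1 u2 : 0 < p -> 0 < lam -> 0 < b -> Sol p lam b u u1 u2 -> sqrt lam * b < PI.
Proof.
  intros Hp Hl Hb HS. pose proof HS as [Hu [Hu1 [Hode [Hd0 [Hub [Hlb Hpos]]]]]].
  set (w := sqrt lam). assert (Hw : 0 < w) by (unfold w; apply sqrt_lt_R0; lra).
  pose proof PI_RGT_0 as HPI.
  destruct (Rlt_dec (w * b) PI) as [|Hge]; [auto|exfalso].
  set (c := PI / w).
  assert (Hcb : c <= b) by (unfold c; apply (Rmult_le_reg_l w); [lra|]; unfold Rdiv; rewrite <- Rmult_assoc, (Rmult_comm w PI), Rmult_assoc, Rinv_r, Rmult_1_r; lra).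
  assert (Hc : 0 < c) by (unfold c; apply Rdiv_lt_0_compat; lra).
  assert (Hwc : w * c = PI) by (unfold c; field; lra).
  set (W' := fun x => - x * Rpower (u x) p * sin (w * x)).
  assert (HD : forall x, 0 < x < b -> is_derive (Wf w u u1) x (W' x)).
  { intros x Hx. apply (W_deriv p lam b u u1 u2 x Hl HS Hx). }
  assert (HN : forall x, 0 < x <= c -> W' x <= 0).
  { intros x Hx. unfold W'. assert (0 <= sin (w * x)) by (apply sin_ge_0; nra).
    pose proof (Rpower_pos (u x) p). assert (0 <= x * Rpower (u x) p * sin (w * x)); [|lra].
    apply Rmult_le_pos; [apply Rmult_le_pos|]; lra. }
  assert (HNs : forall x, 0 < x < c -> W' x < 0).
  { intros x Hx. unfold W'. assert (0 < sin (w * x)) by (apply sin_gt_0; nra).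
    pose proof (Rpower_pos (u x) p). assert (0 < x * Rpower (u x) p * sin (w * x)); [|lra].
    apply Rmult_lt_0_compat; [apply Rmult_lt_0_compat|]; lra. }
  assert (Hnear0 : exists d C, 0 < d /\ forall t, 0 < t < d -> Wf w u u1 t <= C * t).
  { destruct (bound0 p lam b u u1 u2 ltac:(lra) Hl Hb HS) as [d [U0 [V1 [Hd [Hd2 [Hd1 HB]]]]]].
    exists d, ((U0 + V1) * w + w * U0). split; [auto|]. intros t Ht. destruct (HB t Ht) as [HU HV].
    unfold Wf.
    assert (Hs : Rabs (sin (w * t)) <= w * t) by (apply sin_small; nra).
    assert (Hv : Rabs (u t + t * u1 t) <= U0 + V1).
    { pose proof (Rabs_triang (u t) (t * u1 t)). rewrite Rabs_mult, (Rabs_right t) in H by lra.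
      rewrite (Rabs_right (u t)) in H by lra. pose proof (Rabs_pos (u1 t)). assert (t * Rabs (u1 t) <= 1 * V1) by (apply Rmult_le_compat; lra). lra. }
    pose proof (abs_prod_le _ _ _ _ Hv Hs).
    pose proof (COS_bound (w * t)).
    assert (- (w * t * u t * cos (w * t)) <= w * t * U0).
    { assert (0 <= w * t * u t) by (apply Rmult_le_pos; [apply Rmult_le_pos|]; lra).
      assert (w * t * u t <= w * t * U0) by (apply Rmult_le_compat_l; nra). nra. }
    nra. }
  assert (Hneg : Wf w u u1 (c/2) < 0).
  { assert (Wf w u u1 (c/4) <= 0).
    { apply (G_nonpos (Wf w u u1) W' c Hc); auto.
      - intros x Hx. apply HD. lra.
      - intros x Hx. apply HN. lra.
      - lra. }
    assert (Wf w u u1 (c/2) < Wf w u u1 (c/4)); [|lra].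
    apply (mvt_lt _ W'); [lra| |].
    - intros x Hx. apply HD. lra.
    - intros x Hx. apply HNs. lra. }
  destruct (Rlt_dec c b) as [Hlt|Hnlt].
  - assert (Wf w u u1 c <= Wf w u u1 (c/2)).
    { apply (mvt_le _ W'); [lra| |].
      - intros x Hx. apply HD. lra.
      - intros x Hx. apply HN. lra. }
    assert (0 < Wf w u u1 c); [|lra].
    unfold Wf. rewrite Hwc, sin_PI, cos_PI.
    assert (0 < u c) by (apply Hpos; lra). nra.
  - assert (Hcb' : c = b) by lra.
    apply (final_contra (Wf w u u1) W' b (c/2)); [lra| | | lra |].
    + intros x Hx. apply HD. lra.
    + intros x Hx. apply HN. lra.
    + intros eps Heps.
      destruct (boundb p lam b u u1 u2 ltac:(lra) Hl Hb HS) as [db [V [Hdb [Hdb2 HV]]]].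
      destruct (lim_left _ _ _ Hlb 1 Rlt_0_1) as [du [Hdu HU]].
      set (K := (1 + b * Rabs V) * w + 1).
      assert (HK : 0 < K) by (unfold K; pose proof (Rabs_pos V); nra).
      set (eta := Rmin (Rmin db du) (Rmin (b/2) (eps / K)) / 2).
      assert (He1 : eta <= db/2 /\ eta <= du / 2 /\ eta <= b/4 /\ eta <= eps / K / 2).
      { unfold eta. pose proof (Rmin_l (Rmin db du) (Rmin (b/2) (eps / K))).
        pose proof (Rmin_r (Rmin db du) (Rmin (b/2) (eps / K))).
        pose proof (Rmin_l db du). pose proof (Rmin_r db du).
        pose proof (Rmin_l (b/2) (eps/K)). pose proof (Rmin_r (b/2) (eps/K)). lra. }
      assert (He0 : 0 < eta).
      { unfold eta. apply Rdiv_lt_0_compat; [|lra]. repeat apply Rmin_glb_lt; try lra.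
        apply Rdiv_lt_0_compat; lra. }
      exists (b - eta). split; [lra|].
      set (r := b - eta).
      assert (Hur : 0 < u r < 1).
      { split. apply Hpos; unfold r; lra. specialize (HU r ltac:(unfold r; lra)).
        rewrite Rminus_0_r in HU. apply Rabs_lt_between in HU. lra. }
      assert (Hu1r : Rabs (u1 r) <= V) by (apply HV; unfold r; lra).
      unfold Wf.
      assert (Hsin : sin (w * r) = sin (w * eta)).
      { rewrite <- sin_PI_x. f_equal. unfold r. rewrite <- Hwc, Hcb'. ring. }
      assert (Hcos : cos (w * r) <= 0).
      { apply cos_le_0.
        - assert (Hq: w * (b/2) <= w * r) by (apply Rmult_le_compat_l; unfold r; lra).
          rewrite <- Hcb' in Hq. replace (w * (c/2)) with (PI/2) in Hq by (rewrite <- Hwc; field). lra.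
        - assert (Hq: w * r <= w * b) by (apply Rmult_le_compat_l; unfold r; lra). rewrite <- Hcb', Hwc in Hq. lra. }
      assert (Hs : Rabs (sin (w * eta)) <= w * eta) by (apply sin_small; nra).
      assert (Hv : Rabs (u r + r * u1 r) <= 1 + b * Rabs V).
      { pose proof (Rabs_triang (u r) (r * u1 r)) as H. rewrite Rabs_mult, (Rabs_right r) in H by (unfold r; lra).
        rewrite (Rabs_right (u r)) in H by lra. pose proof (Rle_abs V).
        assert (r * Rabs (u1 r) <= b * Rabs V) by (apply Rmult_le_compat; try apply Rabs_pos; try lra; unfold r; lra). lra. }
      rewrite Hsin.
      pose proof (abs_prod_le (- (u r + r * u1 r)) (sin (w * eta)) _ _ ltac:(rewrite Rabs_Ropp; exact Hv) Hs).
      assert (0 <= - (w * r * u r * cos (w * r))).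
      { assert (0 <= w * r * u r) by (apply Rmult_le_pos; [apply Rmult_le_pos|]; try lra; unfold r; lra). nra. }
      assert ((1 + b * Rabs V) * (w * eta) < eps).
      { assert ((1 + b * Rabs V) * w * eta <= K * eta) by (apply Rmult_le_compat_r; unfold K; lra).
        assert (K * eta <= eps / 2).
        { destruct He1 as [_ [_ [_ He4]]]. apply (Rmult_le_compat_l K) in He4; [|lra].
          replace (K * (eps / K / 2)) with (eps/2) in He4 by (field; lra). lra. }
        lra. }
      lra.
Qed.

Lemma Jd_eq p w s r U : 5 < p -> 0 < r ->
  U * (psi1 w s r * (p + 3) / 2 - (p - 1) * psi w s r / r)
  = - (U * ((p + 3) / (2 * r))) * hh p s (2 * w * r - s).
Proof.
  intros Hp Hr. unfold psi1, psi, hh, k2.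
  replace (2 * w * r - s + s) with (2 * w * r) by ring. field. split; lra.
Qed.

Lemma lower p lam b u u1 u2 : 5 < p -> 0 < lam -> 0 < b -> Sol p lam b u u1 u2 ->
  PI / 2 + sst p < sqrt lam * b.
Proof.
  intros Hp Hl Hb HS. pose proof HS as [Hu [Hu1 [Hode [Hd0 [Hub [Hlb Hpos]]]]]].
  set (w := sqrt lam). assert (Hw : 0 < w) by (unfold w; apply sqrt_lt_R0; lra).
  assert (Hww : w * w = lam) by (unfold w; apply sqrt_sqrt; lra).
  pose proof PI_RGT_0 as HPI. pose proof (sst_bounds p Hp) as Hsst.
  destruct (Rlt_dec (PI / 2 + sst p) (w * b)) as [|Hge]; [auto|exfalso].
  set (s := Rmin (sst p) (w * b)).
  assert (Hs1 : s <= sst p) by apply Rmin_l.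
  assert (Hs2 : s <= w * b) by apply Rmin_r.
  assert (Hs0 : 0 <= s) by (unfold s; apply Rmin_glb; nra).
  assert (Hs3 : 2 * w * b - s <= PI + s).
  { unfold s. destruct (Rle_dec (sst p) (w * b)).
    - rewrite Rmin_left by lra. lra.
    - rewrite Rmin_right by lra. lra. }
  set (J := Jf p lam s u u1).
  set (J' := fun r => r^2 * u r * Rpower (u r) p / (p + 1) *
     (psi1 w s r * (p + 3) / 2 - (p - 1) * psi w s r / r)).
  assert (HD : forall x, 0 < x < b -> is_derive J x (J' x)).
  { intros x Hx. apply (J_deriv p lam b s u u1 u2 x Hl ltac:(lra) HS Hx). }
  assert (HJ'eq : forall x, 0 < x < b -> J' x = - (x^2 * u x * Rpower (u x) p / (p + 1) * ((p + 3) / (2 * x))) * hh p s (2 * w * x - s)).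
  { intros x Hx. unfold J'. apply Jd_eq; lra. }
  assert (Hcoef : forall x, 0 < x < b -> 0 < x^2 * u x * Rpower (u x) p / (p + 1) * ((p + 3) / (2 * x))).
  { intros x Hx. pose proof (Rpower_pos (u x) p). assert (0 < u x) by (apply Hpos; lra).
    apply Rmult_lt_0_compat; [|apply Rdiv_lt_0_compat; lra].
    apply Rdiv_lt_0_compat; [|lra]. apply Rmult_lt_0_compat; [apply Rmult_lt_0_compat|]; nra. }
  assert (HN : forall x, 0 < x < b -> J' x <= 0).
  { intros x Hx. rewrite HJ'eq by auto. specialize (Hcoef x Hx).
    assert (0 <= hh p s (2 * w * x - s)); [|nra].
    destruct (Rle_dec (2 * w * x - s) 0).
    - apply hh_nonneg; auto; nra.
    - left. apply hh_pos; auto. split; [lra|]. assert (w * x < w * b) by (apply Rmult_lt_compat_l; lra). lra. }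
  assert (HNs : forall x, 5 * b / 8 <= x <= 3 * b / 4 -> J' x < 0).
  { intros x Hx. rewrite HJ'eq by lra. specialize (Hcoef x ltac:(lra)).
    assert (0 < hh p s (2 * w * x - s)); [|nra].
    apply hh_pos; auto. split.
    - assert (w * b < 2 * w * x) by nra. lra.
    - assert (w * x < w * b) by (apply Rmult_lt_compat_l; lra). lra. }
  assert (Hnear0 : exists d C, 0 < d /\ forall t, 0 < t < d -> J t <= C * t).
  { destruct (bound0 p lam b u u1 u2 ltac:(lra) Hl Hb HS) as [d [U0 [V1 [Hd [Hd2 [Hd1 HB]]]]]].
    set (PU := Rpower U0 p).
    set (B := (U0 + V1)^2 / 2 + lam * U0^2 / 2 + U0 * PU / (p + 1)).
    exists d, (2 * w * B + w * (U0 * (U0 + V1)) + w * w * U0^2). split; [auto|].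
    intros t Ht. destruct (HB t Ht) as [HU HV].
    assert (HV0 : 0 <= V1) by (pose proof (Rabs_pos (u1 t)); lra).
    assert (HP : 0 < Rpower (u t) p <= PU) by (split; [apply Rpower_pos | apply Rle_Rpower_l; lra]).
    assert (Hv : Rabs (u t + t * u1 t) <= U0 + V1).
    { pose proof (Rabs_triang (u t) (t * u1 t)) as H. rewrite Rabs_mult, (Rabs_right t) in H by lra.
      rewrite (Rabs_right (u t)) in H by lra. pose proof (Rabs_pos (u1 t)).
      assert (t * Rabs (u1 t) <= 1 * V1) by (apply Rmult_le_compat; lra). lra. }
    assert (Hpsi : Rabs (psi w s t) <= 2 * w * t).
    { unfold psi. pose proof (sin_lip (-s) (2 * w * t - s)) as H. rewrite sin_neg in H.
      replace (2 * w * t - s - - s) with (2 * w * t) in H by ring.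
      replace (sin (2 * w * t - s) - - sin s) with (sin (2 * w * t - s) + sin s) in H by ring.
      rewrite (Rabs_right (2 * w * t)) in H by nra. exact H. }
    assert (Hpsi1 : Rabs (psi1 w s t) <= 2 * w).
    { unfold psi1. rewrite Rabs_mult, (Rabs_right (2 * w)) by lra. pose proof (COS_bound (2 * w * t - s)).
      assert (Rabs (cos (2 * w * t - s)) <= 1) by (apply Rabs_le; lra). nra. }
    assert (Hpsi2 : Rabs (psi2 w s t) <= 4 * w * w).
    { unfold psi2. rewrite Rabs_mult, Rabs_Ropp, (Rabs_right (4 * w * w)) by nra. pose proof (SIN_bound (2 * w * t - s)).
      assert (Rabs (sin (2 * w * t - s)) <= 1) by (apply Rabs_le; lra).
      assert (0 <= 4 * w * w) by nra. nra. }
    assert (HQ : Rabs ((u t + t * u1 t)^2 / 2 + lam * t^2 * (u t)^2 / 2 + t^2 * u t * Rpower (u t) p / (p + 1)) <= B).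
    { rewrite Rabs_right.
      - unfold B. 
        assert ((u t + t * u1 t)^2 <= (U0 + V1)^2).
        { rewrite <- (pow2_abs (u t + t * u1 t)). pose proof (Rabs_pos (u t + t * u1 t)). simpl. nra. }
        assert (Htt : 0 <= t * t <= 1) by nra.
        assert (Huu : u t * u t <= U0 * U0) by nra.
        assert (HuP : u t * Rpower (u t) p <= U0 * PU) by (apply Rmult_le_compat; lra).
        assert (t^2 * (u t)^2 <= U0^2).
        { simpl. rewrite !Rmult_1_r. assert (t * t * (u t * u t) <= 1 * (U0 * U0)) by (apply Rmult_le_compat; nra). nra. }
        assert (t^2 * u t * Rpower (u t) p <= U0 * PU).
        { simpl. rewrite !Rmult_1_r. assert (t * t * (u t * Rpower (u t) p) <= 1 * (U0 * PU)) by (apply Rmult_le_compat; nra). nra. }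
        assert (lam * t^2 * (u t)^2 <= lam * U0^2) by nra.
        assert (t^2 * u t * Rpower (u t) p / (p+1) <= U0 * PU / (p+1)) by (apply Rmult_le_compat_r; [left; apply Rinv_0_lt_compat; lra | lra]).
        lra.
      - apply Rle_ge. assert (0 <= t^2 * u t * Rpower (u t) p / (p + 1)).
        { apply Rmult_le_pos; [|left; apply Rinv_0_lt_compat; lra]. simpl. repeat apply Rmult_le_pos; lra. }
        assert (0 <= (u t + t * u1 t)^2) by apply pow2_ge_0.
        assert (0 <= lam * t^2 * (u t)^2) by (simpl; repeat apply Rmult_le_pos; lra). lra. }
    unfold J, Jf. fold w.
    pose proof (abs_prod_le _ _ _ _ Hpsi HQ) as T1.
    assert (Htuv : Rabs (t * u t * (u t + t * u1 t)) <= t * (U0 * (U0 + V1))).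
    { rewrite !Rabs_mult, (Rabs_right t), (Rabs_right (u t)) by lra.
      assert (u t * Rabs (u t + t * u1 t) <= U0 * (U0 + V1)) by (apply Rmult_le_compat; try lra; apply Rabs_pos).
      nra. }
    assert (T2 := abs_prod_le (- psi1 w s t) _ _ _ ltac:(rewrite Rabs_Ropp; exact Hpsi1) Htuv).
    assert (Htu2 : Rabs (t^2 * (u t)^2) <= t * U0^2).
    { rewrite Rabs_right by (apply Rle_ge; simpl; repeat apply Rmult_le_pos; lra). simpl. rewrite !Rmult_1_r.
      assert (t * (u t * u t) <= 1 * (U0 * U0)) by (apply Rmult_le_compat; nra). nra. }
    assert (T3 := abs_prod_le (psi2 w s t) _ _ _ Hpsi2 Htu2).
    assert (HB0 : 0 <= B) by (pose proof (Rabs_pos ((u t + t * u1 t)^2 / 2 + lam * t^2 * (u t)^2 / 2 + t^2 * u t * Rpower (u t) p / (p + 1))); lra).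
    replace (psi1 w s t * t * u t * (u t + t * u1 t) / 2) with (- (- psi1 w s t * (t * u t * (u t + t * u1 t))) / 2) by (unfold Rdiv; ring).
    replace (psi2 w s t * t ^ 2 * u t ^ 2 / 4) with (psi2 w s t * (t^2 * (u t)^2) / 4) by (unfold Rdiv; ring).
    assert (0 <= U0 * (U0 + V1)) by nra.
    lra. }
  assert (Hneg : J (3 * b / 4) < 0).
  { assert (J (5 * b / 8) <= 0).
    { apply (G_nonpos J J' b Hb); auto. lra. }
    assert (J (3 * b / 4) < J (5 * b / 8)); [|lra].
    apply (mvt_lt _ J'); [lra| |].
    - intros x Hx. apply HD. lra.
    - intros x Hx. apply HNs. lra. }
  apply (final_contra J J' b (3 * b / 4)); [lra| | | exact Hneg |].
  - intros x Hx. apply HD. lra.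
  - intros x Hx. apply HN. lra.
  - intros eps Heps.
    destruct (boundb p lam b u u1 u2 ltac:(lra) Hl Hb HS) as [db [V [Hdb [Hdb2 HV]]]].
    set (K := w * b * (1 + b * Rabs V) + w * w * b * b + 1).
    assert (HK : 0 < K) by (unfold K; pose proof (Rabs_pos V); assert (0 <= w * b * (1 + b * Rabs V)) by (apply Rmult_le_pos; nra); nra).
    assert (He' : 0 < Rmin 1 (eps / K)) by (apply Rmin_glb_lt; [lra| apply Rdiv_lt_0_compat; lra]).
    destruct (lim_left _ _ _ Hlb _ He') as [du [Hdu HU]].
    set (eta := Rmin (Rmin db du) (b/4) / 2).
    assert (He1 : eta <= db/2 /\ eta <= du / 2 /\ eta <= b/8).
    { unfold eta. pose proof (Rmin_l (Rmin db du) (b/4)). pose proof (Rmin_r (Rmin db du) (b/4)).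
      pose proof (Rmin_l db du). pose proof (Rmin_r db du). lra. }
    assert (He0 : 0 < eta).
    { unfold eta. apply Rdiv_lt_0_compat; [|lra]. repeat apply Rmin_glb_lt; lra. }
    exists (b - eta). split; [lra|].
    set (r := b - eta).
    assert (Hrb : 3 * b / 4 < r < b) by (unfold r; lra).
    assert (Hur : 0 < u r < Rmin 1 (eps / K)).
    { split. apply Hpos; lra. specialize (HU r ltac:(unfold r; lra)).
      rewrite Rminus_0_r in HU. apply Rabs_lt_between in HU. lra. }
    assert (Hu1' : u r < 1) by (pose proof (Rmin_l 1 (eps / K)); lra).
    assert (Hu2' : u r < eps / K) by (pose proof (Rmin_r 1 (eps / K)); lra).
    assert (Hu1r : Rabs (u1 r) <= V) by (apply HV; unfold r; lra).
    assert (HP : 0 < Rpower (u r) p) by apply Rpower_pos.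
    unfold J, Jf. fold w.
    assert (Hpsi : 0 <= psi w s r).
    { unfold psi. apply psi_nonneg; [lra|]. split; [nra|].
      assert (w * r < w * b) by (apply Rmult_lt_compat_l; lra). lra. }
    assert (HQ : 0 <= (u r + r * u1 r)^2 / 2 + lam * r^2 * (u r)^2 / 2 + r^2 * u r * Rpower (u r) p / (p + 1)).
    { assert (0 <= r^2 * u r * Rpower (u r) p / (p + 1)).
      { apply Rmult_le_pos; [|left; apply Rinv_0_lt_compat; lra]. simpl. repeat apply Rmult_le_pos; lra. }
      assert (0 <= (u r + r * u1 r)^2) by apply pow2_ge_0.
      assert (0 <= lam * r^2 * (u r)^2) by (simpl; repeat apply Rmult_le_pos; lra). lra. }
    assert (T1 : 0 <= psi w s r * ((u r + r * u1 r)^2 / 2 + lam * r^2 * (u r)^2 / 2 + r^2 * u r * Rpower (u r) p / (p + 1))) by (apply Rmult_le_pos; lra).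
    assert (Hpsi1 : Rabs (psi1 w s r) <= 2 * w).
    { unfold psi1. rewrite Rabs_mult, (Rabs_right (2 * w)) by lra. pose proof (COS_bound (2 * w * r - s)).
      assert (Rabs (cos (2 * w * r - s)) <= 1) by (apply Rabs_le; lra). nra. }
    assert (Hpsi2 : Rabs (psi2 w s r) <= 4 * w * w).
    { unfold psi2. rewrite Rabs_mult, Rabs_Ropp, (Rabs_right (4 * w * w)) by nra. pose proof (SIN_bound (2 * w * r - s)).
      assert (Rabs (sin (2 * w * r - s)) <= 1) by (apply Rabs_le; lra).
      assert (0 <= 4 * w * w) by nra. nra. }
    assert (Hv : Rabs (u r + r * u1 r) <= 1 + b * Rabs V).
    { pose proof (Rabs_triang (u r) (r * u1 r)) as H. rewrite Rabs_mult, (Rabs_right r) in H by lra.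
      rewrite (Rabs_right (u r)) in H by lra. pose proof (Rle_abs V).
      assert (r * Rabs (u1 r) <= b * Rabs V) by (apply Rmult_le_compat; try apply Rabs_pos; lra). lra. }
    assert (Htuv : Rabs (r * u r * (u r + r * u1 r)) <= u r * (b * (1 + b * Rabs V))).
    { rewrite !Rabs_mult, (Rabs_right r), (Rabs_right (u r)) by lra.
      assert (r * Rabs (u r + r * u1 r) <= b * (1 + b * Rabs V)) by (apply Rmult_le_compat; try lra; apply Rabs_pos).
      nra. }
    assert (T2 := abs_prod_le (psi1 w s r) _ _ _ Hpsi1 Htuv).
    assert (Hru2 : Rabs (r^2 * (u r)^2) <= u r * (b * b)).
    { rewrite Rabs_right by (apply Rle_ge; simpl; nra). simpl.
      assert (r * r <= b * b) by nra. assert (u r * u r <= u r) by nra. nra. }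
    assert (T3 := abs_prod_le (- psi2 w s r) _ _ _ ltac:(rewrite Rabs_Ropp; exact Hpsi2) Hru2).
    replace (psi1 w s r * r * u r * (u r + r * u1 r) / 2) with (psi1 w s r * (r * u r * (u r + r * u1 r)) / 2) by (unfold Rdiv; ring).
    replace (psi2 w s r * r ^ 2 * u r ^ 2 / 4) with (- (- psi2 w s r * (r^2 * (u r)^2)) / 4) by (unfold Rdiv; ring).
    assert (u r * K < eps).
    { apply (Rmult_lt_compat_r K) in Hu2'; [|lra]. replace (eps / K * K) with eps in Hu2' by (field; lra). lra. }
    unfold K in *.
    assert (0 <= u r * (b * (1 + b * Rabs V))) by (pose proof (Rabs_pos V); apply Rmult_le_pos; nra).
    nra.
Qed.

Theorem corollary1p8 (p lambda b : R) :
  5 < p -> 0 < lambda -> 0 < b ->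
  (exists u : R -> R, positive_radial_solution p lambda b u) ->
  (lower_const p / sqrt lambda < b /\ b < PI / sqrt lambda) /\
  (lower_const p ^ 2 / PI ^ 2 * lambda1_ball3 b < lambda /\
   lambda < lambda1_ball3 b).
Proof.
  intros Hp Hl Hb [u [u1 [u2 H]]].
  assert (HS : Sol p lambda b u u1 u2) by exact H.
  pose proof (upper p lambda b u u1 u2 ltac:(lra) Hl Hb HS) as Hup.
  pose proof (lower p lambda b u u1 u2 Hp Hl Hb HS) as Hlo.
  assert (HL : lower_const p = PI / 2 + sst p) by (unfold lower_const; apply lower_const_eq; exact Hp).
  rewrite HL. unfold lambda1_ball3.
  pose proof (sst_bounds p Hp). pose proof PI_RGT_0.
  set (w := sqrt lambda) in *. assert (Hw : 0 < w) by (unfold w; apply sqrt_lt_R0; lra).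
  assert (Hww : w * w = lambda) by (unfold w; apply sqrt_sqrt; lra).
  set (Lc := PI / 2 + sst p) in *.
  assert (HLc : 0 < Lc) by (unfold Lc; lra).
  split; split.
  - apply (Rmult_lt_reg_r w); [lra|]. replace (Lc / w * w) with Lc by (field; lra). lra.
  - apply (Rmult_lt_reg_r w); [lra|]. replace (PI / w * w) with PI by (field; lra). lra.
  - replace (Lc ^ 2 / PI ^ 2 * (PI ^ 2 / b ^ 2)) with (Lc ^ 2 / b ^ 2) by (field; lra).
    apply (Rmult_lt_reg_r (b^2)); [nra|]. replace (Lc ^ 2 / b ^ 2 * b ^ 2) with (Lc ^ 2) by (field; lra).
    rewrite <- Hww. simpl. nra.
  - apply (Rmult_lt_reg_r (b^2)); [nra|]. replace (PI ^ 2 / b ^ 2 * b ^ 2) with (PI ^ 2) by (field; lra).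
    rewrite <- Hww. simpl. nra.
Qed.
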